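(* Let $n\ge 2$, $\pi\in S_n$ and $1\le i\le n-1$ with $\pi_i<\pi_{i+1}$, and let $\tau\in S_n$ be obtained from $\pi$ by exchanging the entries in positions $i$ and $i+1$. Let $\lambda=\lambda(\pi)$ and $\mu=\lambda(\tau)$, with parts $\lambda_1\ge\lambda_2\ge\cdots$ and $\mu_1\ge\mu_2\ge\cdots$ (set $\lambda_m=0$, $\mu_m=0$ for $m$ beyond the number of parts). Then for every $1\le j\le n$, \[\sum_{m=1}^j \mu_m\le \sum_{m=1}^j\lambda_m\le \sum_{m=1}^j\mu_m+1.\]
   Context: Permutations $\pi\in S_n$ are written in one-line notation $\pi=\pi_1\pi_2\cdots\pi_n$. For $\pi\in S_n$, $\lambda(\pi)$ denotes the shape (a partition of $n$) of the pair of standard Young tableaux associated with $\pi$ by the Robinson–Schensted–Knuth (RSK) correspondence. *)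

(* Defs.v *)
From mathcomp Require Import all_boot all_order all_fingroup.
Set Implicit Arguments. Unset Strict Implicit. Unset Printing Implicit Defensive.

Fixpoint ins_row (r : seq nat) (x : nat) : seq nat * option nat :=
  match r with
  | [::] => ([:: x], None)
  | y :: r' =>
      if x < y then (x :: r', Some y)
      else let: (r'', b) := ins_row r' x in (y :: r'', b)
  end.

Fixpoint rs_insert (t : seq (seq nat)) (x : nat) : seq (seq nat) :=
  match t with
  | [::] => [:: [:: x]]
  | r :: t' =>
      let: (r', b) := ins_row r x in
      match b with
      | None => r' :: t'
      | Some y => r' :: rs_insert t' y
      end
  end.

Definition P_tableau (w : seq nat) : seq (seq nat) := foldl rs_insert [::] w.

(* One-line notation of pi : 'S_n (values shifted to 0..n-1, which does not
   affect RSK since only relative order matters). *)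
Definition one_line n (pi : 'S_n) : seq nat := [seq val (pi k) | k <- enum 'I_n].

Definition rsk_shape n (pi : 'S_n) : seq nat := map size (P_tableau (one_line pi)).

Definition part_sum (sh : seq nat) (j : nat) : nat := \sum_(m < j) nth 0 sh m.

(* Main.v *)
Require Import Defs.
From mathcomp Require Import all_boot all_order all_fingroup.
From mathcomp Require Import zify.
Set Implicit Arguments. Unset Strict Implicit. Unset Printing Implicit Defensive.

Definition cls (k : nat) (z : seq (nat * nat)) : seq nat :=
  [seq p.1 | p <- z & p.2 == k].
Definition good (j : nat) (z : seq (nat * nat)) :=
  forall k, k < j -> path leq 0 (cls k z).
Definition lval (j : nat) (z : seq (nat * nat)) := count (fun p : nat * nat => p.2 < j) z.
Definition Gle (w w' : seq nat) := forall j z, unzip1 z = w -> good j z ->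
  exists z', unzip1 z' = w' /\ good j z' /\ lval j z <= lval j z'.

Lemma cls_cat k s t : cls k (s ++ t) = cls k s ++ cls k t.
Proof. by rewrite /cls filter_cat map_cat. Qed.
Lemma cls_cons k p s : cls k (p :: s) = if p.2 == k then p.1 :: cls k s else cls k s.
Proof. by rewrite /cls /=; case: ifP. Qed.
Lemma lval_cat j s t : lval j (s ++ t) = lval j s + lval j t.
Proof. by rewrite /lval count_cat. Qed.
Lemma lval_cons j p s : lval j (p :: s) = (p.2 < j) + lval j s.
Proof. by []. Qed.

Lemma pathA (A B : seq nat) x : path leq 0 (A ++ x :: B) =
  [&& path leq 0 A, last 0 A <= x & path leq x B].
Proof. by rewrite cat_path /= andbA. Qed.

Lemma path_low x y s : x <= y -> path leq y s -> path leq x s.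
Proof. by case: s => //= h s hxy /andP [hy ->]; rewrite (leq_trans hxy hy). Qed.

Lemma swap_good j a b p1 p2 : ~~ ((p1.2 == p2.2) && (p1.2 < j)) ->
  good j (a ++ p1 :: p2 :: b) -> good j (a ++ p2 :: p1 :: b).
Proof.
move=> hn hg k hk; have := hg k hk.
rewrite !cls_cat !cls_cons.
case: (eqVneq p1.2 k) => [e1|n1]; case: (eqVneq p2.2 k) => [e2|n2] //.
by move: hn; rewrite e1 e2 eqxx hk.
Qed.

Lemma swap_lval j a b p1 p2 :
  lval j (a ++ p1 :: p2 :: b) = lval j (a ++ p2 :: p1 :: b).
Proof. by rewrite !lval_cat !lval_cons (addnCA (p1.2 < j)). Qed.

Lemma unzip1_split (z : seq (nat * nat)) a b : unzip1 z = a ++ b ->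
  exists a' b', [/\ z = a' ++ b', unzip1 a' = a & unzip1 b' = b].
Proof.
move=> h; exists (take (size a) z), (drop (size a) z); split.
- by rewrite cat_take_drop.
- by rewrite /unzip1 map_take -/(unzip1 z) h take_size_cat.
- by rewrite /unzip1 map_drop -/(unzip1 z) h drop_size_cat.
Qed.

Lemma unzip1_cons (z : seq (nat * nat)) x b : unzip1 z = x :: b ->
  exists l z', z = (x, l) :: z' /\ unzip1 z' = b.
Proof. by case: z => // [[x' l] z'] [<- <-]; exists l, z'. Qed.

Lemma dec2 (z : seq (nat * nat)) a b x y : unzip1 z = a ++ x :: y :: b ->
  exists a' b' l1 l2, [/\ z = a' ++ (x, l1) :: (y, l2) :: b', unzip1 a' = a & unzip1 b' = b].
Proof.
move=> /unzip1_split [a' [c [-> ha hc]]].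
have [l1 [c1 [-> hc1]]] := unzip1_cons hc.
have [l2 [c2 [-> hc2]]] := unzip1_cons hc1.
by exists a', c2, l1, l2.
Qed.

Lemma dec3 (z : seq (nat * nat)) a b x y t : unzip1 z = a ++ x :: y :: t :: b ->
  exists a' b' l1 l2 l3, [/\ z = a' ++ (x, l1) :: (y, l2) :: (t, l3) :: b',
    unzip1 a' = a & unzip1 b' = b].
Proof.
move=> /unzip1_split [a' [c [-> ha hc]]].
have [l1 [c1 [-> hc1]]] := unzip1_cons hc.
have [l2 [c2 [-> hc2]]] := unzip1_cons hc1.
have [l3 [c3 [-> hc3]]] := unzip1_cons hc2.
by exists a', c3, l1, l2, l3.
Qed.

Lemma Gle_swap a b x y : (forall j l, l < j -> forall z, good j z ->
     forall a' b', z = a' ++ (x, l) :: (y, l) :: b' -> False) ->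
  Gle (a ++ x :: y :: b) (a ++ y :: x :: b).
Proof.
move=> hno j z hz hg.
have [a' [b' [l1 [l2 [ez ha hb]]]]] := dec2 hz.
exists (a' ++ (y, l2) :: (x, l1) :: b'); split; [|split].
- by rewrite /unzip1 map_cat /= -/(unzip1 a') -/(unzip1 b') ha hb.
- apply: (@swap_good j a' b' (x, l1) (y, l2)); last by rewrite -ez.
  apply/negP => /andP [/= /eqP el hl]; subst l2.
  exact: (hno j l1 hl z hg a' b' ez).
- by rewrite ez swap_lval.
Qed.

Lemma no_desc j l z a' b' x y : y < x -> l < j -> good j z ->
  z = a' ++ (x, l) :: (y, l) :: b' -> False.
Proof.
move=> hxy hl hg ez; have := hg l hl.
rewrite ez cls_cat !cls_cons /= eqxx pathA /= => /and3P [_ _ /andP [h _]].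
by move: h; rewrite leqNgt hxy.
Qed.

Definition sw (l m k : nat) := if k == l then m else if k == m then l else k.
Definition swl l m (p : nat * nat) := (p.1, sw l m p.2).

Lemma sw_inv l m k : sw l m (sw l m k) = k.
Proof.
rewrite /sw; case: (eqVneq k l) => [->|kl].
  by rewrite eqxx; case: (eqVneq m l) => [->|ml]; rewrite ?eqxx.
case: (eqVneq k m) => [->|km]; first by rewrite eqxx; case: (eqVneq l m).
by rewrite (negbTE kl) (negbTE km).
Qed.

Lemma sw_eq l m a k : (sw l m a == k) = (a == sw l m k).
Proof. by apply/eqP/eqP => [<-|->]; rewrite sw_inv. Qed.

Lemma cls_sw l m k s : cls k (map (swl l m) s) = cls (sw l m k) s.
Proof.
elim: s => [//|p s IH]; rewrite /= !cls_cons /= sw_eq IH; done.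
Qed.

Lemma lval_sw j l m s : l < j -> m < j -> lval j (map (swl l m) s) = lval j s.
Proof.
move=> hl hm; rewrite /lval count_map; apply: eq_count => p /=.
rewrite /sw; case: (eqVneq p.2 l) => [->|_]; first by rewrite hl hm.
by case: (eqVneq p.2 m) => [->|_]; rewrite ?hl ?hm.
Qed.

Lemma unzip1_sw l m (s : seq (nat*nat)) : unzip1 (map (swl l m) s) = unzip1 s.
Proof. by rewrite /unzip1 -map_comp. Qed.

Lemma unzip1E (s t : seq (nat*nat)) : unzip1 (s ++ t) = unzip1 s ++ unzip1 t.
Proof. by rewrite /unzip1 map_cat. Qed.

Lemma KA_fw a b x y z : x < y <= z ->
  Gle (a ++ [:: y; z; x] ++ b) (a ++ [:: y; x; z] ++ b).
Proof.
move=> /andP [hxy hyz].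
have e1 : forall s, a ++ y :: s = rcons a y ++ s by move=> s; rewrite cat_rcons.
rewrite /= !e1; apply: Gle_swap => j l hl z0 hg a' b' ez.
apply: (no_desc _ hl hg ez); exact: (leq_trans hxy hyz).
Qed.

Lemma KB_bw a b x y z : x <= y < z ->
  Gle (a ++ [:: z; x; y] ++ b) (a ++ [:: x; z; y] ++ b).
Proof.
move=> /andP [hxy hyz] /=; apply: Gle_swap => j l hl z0 hg a' b' ez.
apply: (no_desc _ hl hg ez); exact: (leq_ltn_trans hxy hyz).
Qed.

Lemma KA_bw a b x y z : x < y <= z ->
  Gle (a ++ [:: y; x; z] ++ b) (a ++ [:: y; z; x] ++ b).
Proof.
move=> /andP [hxy hyz] j z0 hz hg.
have [a' [b' [m [l [l' [ez ha hb]]]]]] := dec3 hz.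
case: (boolP ((l == l') && (l < j))) => hll; last first.
  exists (a' ++ (y, m) :: (z, l') :: (x, l) :: b'); split; [|split].
  - by rewrite unzip1E /= ha hb.
  - rewrite -cat_rcons; apply: (@swap_good j _ b' (x, l) (z, l')) => //.
    by rewrite cat_rcons -ez.
  - by rewrite ez !lval_cat !lval_cons (addnCA (l < j)).
move: hll => /andP [/eqP ell hl]; subst l'.
have Hl := hg l hl; rewrite ez cls_cat !cls_cons /= eqxx in Hl.
case: (ltnP m j) => hm.
  case: (eqVneq m l) => [eml|nml].
    by subst m; exfalso; apply: (@no_desc j l z0 a' ((z, l) :: b') y x).
  have nlm : (l == m) = false by rewrite eq_sym (negbTE nml).
  have Hm := hg m hm; rewrite ez cls_cat !cls_cons /= eqxx ?nlm ?(negbTE nml) in Hm.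
  rewrite ?nlm ?(negbTE nml) in Hl.
  exists (map (swl l m) a' ++ (y, l) :: (z, l) :: (x, m) :: b'); split; [|split].
  - by rewrite unzip1E unzip1_sw /= ha hb.
  - move=> k hk; have := hg k hk.
    rewrite ez !cls_cat !cls_cons cls_sw /= /sw.
    case: (eqVneq k l) => [->|nkl].
      rewrite ?eqxx ?(negbTE nml) ?nlm; move: Hl Hm; rewrite !pathA /= => /and3P [_ h1 /andP [_ h2]].
      move=> /and3P [h3 h4 _] _; rewrite h3 h4 /= h2 andbT.
      exact: hyz.
    have nlk : (l == k) = false by rewrite eq_sym (negbTE nkl).
    rewrite ?nlk ?(negbTE nkl).
    case: (eqVneq k m) => [->|nkm].
      rewrite ?eqxx ?(negbTE nml) ?nlm; move: Hl Hm; rewrite !pathA /= => /and3P [h1 h2 _].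
      move=> /and3P [_ _ h3] _; rewrite h1 h2 /=.
      exact: (path_low (ltnW hxy) h3).
    have nmk : (m == k) = false by rewrite eq_sym (negbTE nkm).
    by rewrite ?nmk ?(negbTE nkm).
  - by rewrite ez !lval_cat !lval_cons lval_sw //= hl hm.
exists (a' ++ (y, l) :: (z, l) :: (x, m) :: b'); split; [|split].
- by rewrite unzip1E /= ha hb.
- move=> k hk; have := hg k hk.
  rewrite ez !cls_cat !cls_cons /=.
  have nmk : (m == k) = false by apply/negbTE; rewrite neq_ltn; apply/orP; right; exact: (leq_trans hk hm).
  rewrite nmk; case: (eqVneq l k) => [<-|//].
  have nml : (m == l) = false by apply/negbTE; rewrite neq_ltn; apply/orP; right; exact: (leq_trans hl hm).
  move=> _; move: Hl; rewrite nml !pathA /= => /and3P [h1 h2 /andP [h3 h4]].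
  by rewrite h1 h4 (leq_trans h2 (ltnW hxy)) hyz.
- rewrite ez !lval_cat !lval_cons /= hl; rewrite leqNgt in hm; rewrite (negbTE hm).
  by rewrite !add0n !add1n.
Qed.

Lemma KB_fw a b x y z : x <= y < z ->
  Gle (a ++ [:: x; z; y] ++ b) (a ++ [:: z; x; y] ++ b).
Proof.
move=> /andP [hxy hyz] j z0 hz hg.
have [a' [b' [l [l' [m [ez ha hb]]]]]] := dec3 hz.
case: (boolP ((l == l') && (l < j))) => hll; last first.
  exists (a' ++ (z, l') :: (x, l) :: (y, m) :: b'); split; [|split].
  - by rewrite unzip1E /= ha hb.
  - by apply: (@swap_good j _ _ (x, l) (z, l')) => //; rewrite -ez.
  - by rewrite ez !lval_cat !lval_cons (addnCA (l < j)).
move: hll => /andP [/eqP ell hl]; subst l'.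
have Hl := hg l hl; rewrite ez cls_cat !cls_cons /= eqxx in Hl.
case: (ltnP m j) => hm.
  case: (eqVneq m l) => [eml|nml].
    subst m; exfalso; apply: (@no_desc j l z0 (rcons a' (x, l)) b' z y) => //.
    by rewrite cat_rcons.
  have nlm : (l == m) = false by rewrite eq_sym (negbTE nml).
  have Hm := hg m hm; rewrite ez cls_cat !cls_cons /= eqxx ?nlm ?(negbTE nml) in Hm.
  rewrite ?nlm ?(negbTE nml) in Hl.
  exists (a' ++ (z, m) :: (x, l) :: (y, l) :: map (swl l m) b'); split; [|split].
  - by rewrite unzip1E /= unzip1_sw ha hb.
  - move=> k hk; have := hg k hk.
    rewrite ez !cls_cat !cls_cons cls_sw /= /sw.
    case: (eqVneq k l) => [->|nkl].
      rewrite ?eqxx ?(negbTE nml) ?nlm; move: Hl Hm; rewrite !pathA /=.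
      move=> /and3P [h1 h2 _] /and3P [_ _ h3] _; rewrite h1 h2 hxy /=.
      exact: h3.
    have nlk : (l == k) = false by rewrite eq_sym (negbTE nkl).
    rewrite ?nlk ?(negbTE nkl).
    case: (eqVneq k m) => [->|nkm].
      rewrite ?eqxx ?(negbTE nml) ?nlm; move: Hl Hm; rewrite !pathA /=.
      move=> /and3P [_ _ /andP [_ h1]] /and3P [h2 h3 _] _; rewrite h2 h1 andbT.
      exact: (leq_trans h3 (ltnW hyz)).
    have nmk : (m == k) = false by rewrite eq_sym (negbTE nkm).
    by rewrite ?nmk ?(negbTE nkm).
  - by rewrite ez !lval_cat !lval_cons lval_sw //= hl hm.
exists (a' ++ (z, m) :: (x, l) :: (y, l) :: b'); split; [|split].
- by rewrite unzip1E /= ha hb.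
- move=> k hk; have := hg k hk.
  rewrite ez !cls_cat !cls_cons /=.
  have nmk : (m == k) = false by apply/negbTE; rewrite neq_ltn; apply/orP; right; exact: (leq_trans hk hm).
  rewrite nmk; case: (eqVneq l k) => [<-|//].
  have nml : (m == l) = false by apply/negbTE; rewrite neq_ltn; apply/orP; right; exact: (leq_trans hl hm).
  move=> _; move: Hl; rewrite nml !pathA /= => /and3P [h1 h2 /andP [h3 h4]].
  by rewrite h1 h2 hxy /=; exact: (path_low (ltnW hyz) h4).
- rewrite ez !lval_cat !lval_cons /= hl; rewrite leqNgt in hm; rewrite (negbTE hm).
  by rewrite !add0n !add1n.
Qed.

Inductive KE : seq nat -> seq nat -> Prop :=
| KE_refl w : KE w w
| KE_sym w w' : KE w w' -> KE w' w
| KE_trans w1 w2 w3 : KE w1 w2 -> KE w2 w3 -> KE w1 w3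
| KE_A a b x y z : x < y <= z -> KE (a ++ [:: y; z; x] ++ b) (a ++ [:: y; x; z] ++ b)
| KE_B a b x y z : x <= y < z -> KE (a ++ [:: x; z; y] ++ b) (a ++ [:: z; x; y] ++ b).

Lemma Gle_refl w : Gle w w.
Proof. by move=> j z hz hg; exists z. Qed.

Lemma Gle_trans w1 w2 w3 : Gle w1 w2 -> Gle w2 w3 -> Gle w1 w3.
Proof.
move=> h1 h2 j z hz hg.
have [z' [hz' [hg' hv']]] := h1 j z hz hg.
have [z'' [hz'' [hg'' hv'']]] := h2 j z' hz' hg'.
by exists z''; split; [|split] => //; exact: leq_trans hv' hv''.
Qed.

Lemma KE_Gle w w' : KE w w' -> Gle w w' /\ Gle w' w.
Proof.
elim=> {w w'}.
- by move=> w; split; apply: Gle_refl.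
- by move=> w w' _ [h1 h2]; split.
- by move=> w1 w2 w3 _ [h1 h2] _ [h3 h4]; split; [exact: Gle_trans h1 h3 | exact: Gle_trans h4 h2].
- by move=> a b x y z h; split; [apply: KA_fw | apply: KA_bw].
- by move=> a b x y z h; split; [apply: KB_fw | apply: KB_bw].
Qed.

Lemma KE_cat c d w w' : KE w w' -> KE (c ++ w ++ d) (c ++ w' ++ d).
Proof.
elim=> {w w'}.
- by move=> w; apply: KE_refl.
- by move=> w w' _ h; apply: KE_sym.
- by move=> w1 w2 w3 _ h1 _ h2; apply: KE_trans h2.
- move=> a b x y z h.
  have e : forall u, c ++ (a ++ u ++ b) ++ d = (c ++ a) ++ u ++ (b ++ d).
    by move=> u; rewrite !catA.
  by rewrite !e; apply: KE_A.
- move=> a b x y z h.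
  have e : forall u, c ++ (a ++ u ++ b) ++ d = (c ++ a) ++ u ++ (b ++ d).
    by move=> u; rewrite !catA.
  by rewrite !e; apply: KE_B.
Qed.

Lemma move_x_left x v : forall pre t, x < t -> path leq t v ->
  KE (pre ++ t :: v ++ [:: x]) (pre ++ t :: x :: v).
Proof.
elim: v => [|h v IH] pre t hxt hp /=; first exact: KE_refl.
move: hp => /= /andP [hth hp].
apply: KE_trans (_ : KE (pre ++ [:: t] ++ h :: x :: v) _).
  have := IH (pre ++ [:: t]) h (leq_trans hxt hth) hp; by rewrite -!catA.
have := @KE_A pre v x t h; rewrite /= => H; apply: H; by rewrite hxt.
Qed.

Lemma move_y_left y u : forall c suf, sorted leq u -> all (fun v => v <= c) u -> c < y ->
  KE (u ++ y :: c :: suf) (y :: u ++ c :: suf).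
Proof.
elim/last_ind: u => [|u h IH] c suf hs ha hcy /=; first exact: KE_refl.
rewrite -cats1 -!catA /=.
move: ha; rewrite all_rcons => /andP [hhc ha].
apply: KE_trans (_ : KE (u ++ y :: h :: c :: suf) _).
  by have := @KE_B u suf h c y; rewrite /= => H; apply: H; rewrite hhc hcy.
have hs' := subseq_sorted leq_trans (subseq_rcons u h) hs.
have tr : transitive (fun a b : nat => b <= a) by move=> a b d h1 h2; exact: leq_trans h2 h1.
have ha' : all (fun v => v <= h) u.
  by move: hs; rewrite -rev_sorted rev_rcons /= => /(order_path_min tr); rewrite all_rev.
exact: IH h (c :: suf) hs' ha' (leq_ltn_trans hhc hcy).
Qed.

Lemma ins_rowE r x : ins_row r x =
  if find (fun t => x < t) r < size r
  then (set_nth 0 r (find (fun t => x < t) r) x, Some (nth 0 r (find (fun t => x < t) r)))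
  else (rcons r x, None).
Proof.
elim: r => [//|y r IH] /=.
case: ifP => hxy //=.
rewrite IH ltnS; by case: ifP.
Qed.

Lemma row_KE r x : sorted leq r -> find (fun t => x < t) r < size r ->
  KE (r ++ [:: x]) (nth 0 r (find (fun t => x < t) r) :: set_nth 0 r (find (fun t => x < t) r) x).
Proof.
set p := find _ r => hs hp.
have hx : x < nth 0 r p by have := @nth_find _ 0 (fun t => x < t) r; rewrite has_find; apply.
rewrite set_nthE hp.
have er : r = take p r ++ nth 0 r p :: drop p.+1 r by rewrite -drop_nth // cat_take_drop.
set u := take p r; set y := nth 0 r p; set v := drop p.+1 r.
rewrite {1}er -catA /=.
apply: KE_trans (_ : KE (u ++ y :: x :: v) _).
  apply: move_x_left => //.
  by move: hs; rewrite {1}er sorted_cat_cons => /andP [].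
apply: move_y_left => //.
- by rewrite /u; exact: (subseq_sorted leq_trans (take_subseq r p) hs).
- apply/(all_nthP 0) => i; rewrite /u size_take hp => hi.
  rewrite nth_take //; have := @before_find _ 0 (fun t => x < t) r i hi.
  by rewrite /= => /negbT; rewrite -leqNgt.
Qed.

Fixpoint rd {A : Type} (t : seq (seq A)) : seq A :=
  match t with [::] => [::] | r :: t' => rd t' ++ r end.

Lemma tab_KE t x : all (sorted leq) t -> KE (rd t ++ [:: x]) (rd (rs_insert t x)).
Proof.
elim: t x => [|r t IH] x /=; first by move=> _; exact: KE_refl.
move=> /andP [hr ht].
rewrite ins_rowE; case: ifP => hp.
  apply: KE_trans (_ : KE (rd t ++ [:: nth 0 r (find (fun t => x < t) r)] ++ set_nth 0 r (find (fun t => x < t) r) x) _).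
    by rewrite -catA; have := KE_cat (rd t) [::] (row_KE hr hp); rewrite !cats0.
  rewrite catA; have := KE_cat [::] (set_nth 0 r (find (fun t => x < t) r) x) (IH (nth 0 r (find (fun t => x < t) r)) ht).
  by rewrite /=.
by rewrite /= -cats1 catA; exact: KE_refl.
Qed.

Definition dom (u r : seq nat) :=
  size r <= size u /\ forall c, c < size r -> nth 0 u c < nth 0 r c.

Definition hdom (u : seq nat) (t : seq (seq nat)) :=
  match t with [::] => True | s :: _ => dom u s end.

Fixpoint tab (t : seq (seq nat)) : Prop :=
  match t with [::] => True | r :: t' => [/\ sorted leq r, hdom r t' & tab t'] end.

Lemma tab_sorted t : tab t -> all (sorted leq) t.
Proof. by elim: t => //= r t IH [-> _ /IH]. Qed.

Section Ins.
Variables (r s : seq nat) (x : nat).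
Hypotheses (hr : sorted leq r) (hs : sorted leq s) (hd : dom r s).
Let p := find (fun t => x < t) r.
Hypothesis hp : p < size r.

Lemma find_le i : i < p -> nth 0 r i <= x.
Proof. by move=> hi; have := @before_find _ 0 (fun t => x < t) r i hi; move/negbT; rewrite -leqNgt. Qed.

Lemma find_gt : x < nth 0 r p.
Proof. by have := @nth_find _ 0 (fun t => x < t) r; rewrite has_find; apply. Qed.

Lemma set_sorted : sorted leq (set_nth 0 r p x).
Proof.
apply/(sortedP 0) => i; rewrite size_set_nth (maxn_idPr hp) => hi.
rewrite !nth_set_nth /=.
have /(sortedP 0) hsr0 := hr; have hsr := hsr0 i hi.
case: (eqVneq i p) => [ecp|nip].
  rewrite ecp (gtn_eqF (ltnSn p)) leq_eqVlt; apply/orP; right.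
  by apply: (leq_trans find_gt); apply: hsr0; rewrite -ecp.
case: (eqVneq i.+1 p) => [eip|nip1].
  by apply: find_le; rewrite -eip.
exact: hsr.
Qed.

Lemma ins_dom : dom (set_nth 0 r p x) (ins_row s (nth 0 r p)).1.
Proof.
set y := nth 0 r p.
have hxy : x < y := find_gt.
set q := find (fun t => y < t) s.
have hqp : q <= p.
  case: (ltnP p (size s)) => hps.
    have := hd.2 p hps; rewrite -/y => hys.
    rewrite leqNgt; apply/negP => hpq.
    by have := @before_find _ 0 (fun t => y < t) s p hpq; rewrite /= hys.
  exact: leq_trans (find_size _ _) hps.
rewrite ins_rowE -/q; case: ifP => hq /=.
  split; first by rewrite !size_set_nth (maxn_idPr hq) (maxn_idPr hp); exact: hd.1.
  move=> c; rewrite size_set_nth (maxn_idPr hq) => hc.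
  rewrite !nth_set_nth /=.
  case: (eqVneq c q) => [->|ncq].
    case: ifP => [_|/negbT nqp]; first exact: hxy.
    apply: leq_ltn_trans hxy; apply: find_le; by rewrite ltn_neqAle nqp hqp.
  case: (eqVneq c p) => [ecp|ncp].
    by rewrite ecp; apply: (ltn_trans hxy); apply: hd.2; rewrite -ecp.
  exact: hd.2.
have eqs : q = size s by apply/eqP; rewrite eqn_leq find_size leqNgt hq.
split.
  by rewrite size_rcons size_set_nth (maxn_idPr hp) -eqs; exact: leq_ltn_trans hqp hp.
move=> c; rewrite size_rcons ltnS => hc.
rewrite nth_set_nth nth_rcons /=.
case: (ltngtP c (size s)) => hcs.
- case: (eqVneq c p) => [ecp|ncp]; last exact: hd.2.
  by rewrite ecp in hcs *; apply: (ltn_trans hxy); apply: hd.2.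
- by move: hc; rewrite leqNgt hcs.
- rewrite hcs -eqs; case: ifP => [_|/negbT nqp]; first exact: hxy.
  apply: leq_ltn_trans hxy; apply: find_le; by rewrite ltn_neqAle nqp hqp.
Qed.
End Ins.

Lemma rcons_sorted r x : sorted leq r -> find (fun t => x < t) r = size r ->
  sorted leq (rcons r x).
Proof.
case: r => [//|h r'] hr hf; move: (hr) => /= hr'; rewrite /= rcons_path hr' /=.
have := @before_find _ 0 (fun t => x < t) (h :: r') (size r').
rewrite hf ltnSn => /(_ isT) /negbT; rewrite -leqNgt.
by have := nth_last 0 (h :: r'); rewrite /= => ->.
Qed.

Lemma tab_ins t x : tab t -> tab (rs_insert t x).
Proof.
elim: t x => [|r t IH] x /=; first by [].
move=> [hr hh ht].
rewrite ins_rowE; case: ifP => hp.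
  split.
  - exact: set_sorted.
  - case: t IH hh ht => [|s t] IH hh ht /=.
      split; first by rewrite size_set_nth (maxn_idPr hp); move: hp; case: (size r).
      case=> // _; rewrite nth_set_nth /=.
      case: ifP => [_|/negbT h0]; first exact: find_gt.
      have h0' : 0 < find (fun t => x < t) r by rewrite lt0n eq_sym.
      exact: leq_ltn_trans (find_le h0') (find_gt hp).
    move: ht => [hs _ _].
    have := @ins_dom r s x hh hp.
    by case: (ins_row s _) => s' [z|].
  - exact: IH.
split => //.
- apply: rcons_sorted => //; apply/eqP; rewrite eqn_leq find_size leqNgt hp //.
- case: t hh {IH ht} => [//|s t] [h1 h2] /=; split.
    by rewrite size_rcons; exact: leqW.
  by move=> c hc; rewrite nth_rcons (leq_trans hc h1); exact: h2.
Qed.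

Lemma tab_P w : tab (P_tableau w).
Proof.
elim/last_ind: w => [//|w x IH].
by rewrite /P_tableau foldl_rcons; apply: tab_ins.
Qed.

Lemma KE_P w : KE w (rd (P_tableau w)).
Proof.
elim/last_ind: w => [|w x IH]; first exact: KE_refl.
rewrite /P_tableau foldl_rcons -/(P_tableau w).
apply: KE_trans (_ : KE (rd (P_tableau w) ++ [:: x]) _).
  by rewrite -cats1; have := KE_cat [::] [:: x] IH.
apply: tab_KE; apply: tab_sorted; exact: tab_P.
Qed.

Lemma ps0 s : part_sum s 0 = 0.
Proof. by rewrite /part_sum big_ord0. Qed.
Lemma psS a s j : part_sum (a :: s) j.+1 = a + part_sum s j.
Proof. by rewrite /part_sum big_ord_recl. Qed.
Lemma psnil j : part_sum [::] j = 0.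
Proof. by rewrite /part_sum big1 // => i _; rewrite nth_nil. Qed.

Fixpoint lread (t : seq (seq nat)) (m0 : nat) : seq (nat * nat) :=
  match t with [::] => [::] | r :: t' => lread t' m0.+1 ++ [seq (v, m0) | v <- r] end.

Lemma unzip1_lread t m0 : unzip1 (lread t m0) = rd t.
Proof.
elim: t m0 => [//|r t IH] m0 /=; rewrite unzip1E IH; congr (_ ++ _).
by rewrite /unzip1 -map_comp map_id.
Qed.

Lemma cls_row k m0 r : cls k [seq (v, m0) | v <- r] = if m0 == k then r else [::].
Proof. elim: r => [|v r IH] /=; first by case: ifP. rewrite cls_cons /= IH. by case: (m0 == k). Qed.

Lemma cls_lread k t m0 : cls k (lread t m0) = if m0 <= k then nth [::] t (k - m0) else [::].
Proof.
elim: t m0 => [|r t IH] m0 /=; first by case: ifP => //; rewrite nth_nil.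
rewrite cls_cat IH cls_row.
case: (ltngtP m0 k) => h.
- by rewrite cats0; have -> : k - m0 = (k - m0.+1).+1 by lia.
- by [].
- by rewrite h subnn.
Qed.

Lemma lval_lread j t m0 : lval j (lread t m0) = part_sum (map size t) (j - m0).
Proof.
elim: t m0 => [|r t IH] m0 /=; first by rewrite psnil.
rewrite lval_cat IH /lval count_map.
case: (ltnP m0 j) => h.
  have -> : j - m0 = (j - m0.+1).+1 by lia.
  rewrite psS addnC; congr (_ + _).
  by rewrite (eq_count (a2 := predT)) ?count_predT // => v /=.
have -> : j - m0 = 0 by lia.
have -> : j - m0.+1 = 0 by lia.
rewrite !ps0; rewrite (eq_count (a2 := pred0)) ?count_pred0 // => v /=.
by rewrite ltnNge h.
Qed.

Lemma lower j t : tab t -> exists z, [/\ unzip1 z = rd t, good j z & lval j z = part_sum (map size t) j].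
Proof.
move=> ht; exists (lread t 0); split.
- exact: unzip1_lread.
- move=> k hk; rewrite cls_lread subn0 /=.
  case: (ltnP k (size t)) => hkt; last by rewrite nth_default.
  have : sorted leq (nth [::] t k).
    by move: (tab_sorted ht) => /allP; apply; rewrite mem_nth.
  by case: (nth [::] t k).
- by rewrite lval_lread subn0.
Qed.

Lemma map_rd (A B : Type) (f : A -> B) (Z : seq (seq A)) :
  map f (rd Z) = rd (map (map f) Z).
Proof. by elim: Z => //= r Z IH; rewrite map_cat IH. Qed.

Lemma reshape_lab t (z : seq (nat * nat)) : unzip1 z = rd t ->
  exists Z, map (map fst) Z = t /\ rd Z = z.
Proof.
elim: t z => [|r t IH] z /=.
  by case: z => // _; exists [::].
move=> /unzip1_split [z1 [z2 [-> h1 h2]]].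
have [Z [e1 e2]] := IH z1 h1.
by exists (z2 :: Z); rewrite /= e1 e2 -h2.
Qed.

Lemma good_subseq j z1 z2 : subseq z1 z2 -> good j z2 -> good j z1.
Proof.
move=> hs hg k hk; have := hg k hk.
have : subseq (0 :: cls k z1) (0 :: cls k z2).
  rewrite /= ?eqxx; apply: map_subseq; rewrite subseq_filter; apply/andP; split.
    exact: filter_all.
  exact: subseq_trans (filter_subseq _ _) hs.
move=> hs' hp; exact: (subseq_sorted leq_trans hs' hp).
Qed.

Lemma rd_subseq (f : seq (nat * nat) -> seq (nat * nat)) Z :
  (forall r, subseq (f r) r) -> subseq (rd (map f Z)) (rd Z).
Proof. by move=> hf; elim: Z => //= r Z IH; apply: cat_subseq. Qed.

Lemma lval_split j (Z : seq (seq (nat * nat))) :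
  lval j (rd Z) = lval j (rd (map (take 1) Z)) + lval j (rd (map (drop 1) Z)).
Proof.
elim: Z => //= r Z IH; rewrite !lval_cat IH.
have := cat_take_drop 1 r; set a := take 1 r; set b := drop 1 r => e.
rewrite -{1}e lval_cat; lia.
Qed.

Lemma tab_drop t : tab t -> tab (map (drop 1) t).
Proof.
elim: t => //= r t IH [hr hh ht]; split.
- exact: drop_sorted.
- case: t hh {IH ht} => [//|s t] /= [h1 h2]; split.
    by rewrite !size_drop leq_sub2r.
  by move=> c; rewrite size_drop => hc; rewrite !nth_drop; apply: h2; lia.
- exact: IH.
Qed.

Lemma ps_split (t : seq (seq nat)) j : part_sum (map size t) j =
  part_sum (map size (map (drop 1) t)) j + \sum_(m < j) (0 < nth 0 (map size t) m).
Proof.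
rewrite /part_sum -big_split; apply: eq_bigr => m _ /=.
case: (ltnP m (size t)) => hm.
  rewrite !(nth_map [::]) ?size_map //= size_drop; lia.
by rewrite !nth_default ?size_map.
Qed.

Lemma tr_gtn : transitive (fun a b : nat => b < a).
Proof. by move=> a b c h1 h2; exact: ltn_trans h2 h1. Qed.

Lemma heads_all t h : tab t ->
  (forall s t', t = s :: t' -> 0 < size s -> h < nth 0 s 0) ->
  all (fun v => h < v) (rd (map (take 1) t)).
Proof.
elim: t h => [//|s t IH] h /= [hs hh ht] hc.
rewrite all_cat; apply/andP; split; last first.
  case: s hs hh hc => //= a s _ _ hc; rewrite ?andbT; rewrite take0 andbT; exact: (hc _ _ erefl).
case: s hs hh hc => [|a s] hs hh hc.
  apply: IH => // s2 t2 e; subst t; move: hh => /= [h1 _] h2.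
  by move: h1; rewrite leqNgt h2.
have ha : h < a by exact: (hc _ _ erefl).
have := IH a ht; rewrite -/(rd _) => H.
have : all (fun v => a < v) (rd [seq take 1 i | i <- t]).
  apply: H => s2 t2 e; subst t; move: hh => /= [_ h2] h3.
  exact: h2 0 h3.
by apply: sub_all => v /= hv; exact: ltn_trans ha hv.
Qed.

Lemma heads_sorted t : tab t -> sorted (fun a b => b < a) (rd (map (take 1) t)).
Proof.
elim: t => //= s t IH [hs hh ht].
case: s hs hh => [|a s] hs hh /=; first by rewrite cats0; exact: IH.
rewrite take0.
have hall : all (fun v => a < v) (rd (map (take 1) t)).
  apply: heads_all => // s2 t2 e; subst t; move: hh => /= [_ h2] h3.
  exact: h2 0 h3.
have := IH ht; move: hall; set L := rd _; case: L => //= b l /andP [hab hall] hp.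
rewrite cats1 rcons_path hp /=.
have : last b l \in b :: l by exact: mem_last.
by rewrite inE => /orP [/eqP -> //|hl]; move/allP: hall; apply.
Qed.

Lemma count_lt j (s : seq (nat * nat)) : count (fun p : nat * nat => p.2 < j) s =
  \sum_(k < j) count (fun p : nat * nat => p.2 == k) s.
Proof.
elim: j => [|j IH]; first by rewrite big_ord0; elim: s => //= p s ->.
rewrite big_ord_recr /= -IH -[RHS]count_predUI.
rewrite (eq_count (a1 := predI _ _) (a2 := pred0)) ?count_pred0 ?addn0.
  by apply: eq_count => p /=; rewrite ltnS leq_eqVlt orbC.
by move=> p /=; case: (eqVneq p.2 j) => [->|]; rewrite ?ltnn ?andbF.
Qed.

Lemma cls_size k s : size (cls k s) = count (fun p : nat * nat => p.2 == k) s.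
Proof. by rewrite /cls size_map size_filter. Qed.

Lemma cls_sub k s : subseq (cls k s) (unzip1 s).
Proof. by apply: map_subseq; exact: filter_subseq. Qed.

Lemma small_cls s : path leq 0 s -> sorted (fun a b => b < a) s -> size s <= 1.
Proof.
case: s => [//|a [//|b s]] /= /andP [hab _] /andP [hba _].
by move: hab; rewrite leqNgt hba.
Qed.

Lemma lval_heads_j j (H : seq (nat * nat)) : good j H ->
  sorted (fun a b => b < a) (unzip1 H) -> lval j H <= j.
Proof.
move=> hg hs; rewrite /lval count_lt.
apply: leq_trans (_ : \sum_(k < j) 1 <= _); last by rewrite sum1_card card_ord.
apply: leq_sum => k _; rewrite -cls_size; apply: small_cls; first exact: hg.
exact: (@subseq_sorted nat (fun a b => b < a) tr_gtn _ _ (cls_sub k H) hs).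
Qed.

Lemma zeros_count sz : path (fun a b => b <= a) 0 sz -> count (fun s => 0 < s) sz = 0.
Proof.
elim: sz => //= b sz IH /andP [hb hp].
by move: hb; rewrite leqn0 => /eqP hb; subst b; rewrite IH.
Qed.

Lemma sum_nonempty sz j : sorted (fun a b => b <= a) sz ->
  \sum_(m < j) (0 < nth 0 sz m) = minn j (count (fun s => 0 < s) sz).
Proof.
elim: sz j => [|a sz IH] j hs.
  by rewrite /= minn0 big1 // => m _; rewrite nth_nil.
case: j => [|j]; first by rewrite big_ord0 min0n.
rewrite big_ord_recl /= (IH j (path_sorted hs)).
case: a hs => [|a] hs /=.
  by rewrite zeros_count // minn0 min0n.
by rewrite add1n minnSS.
Qed.

Lemma tab_sizes t : tab t -> sorted (fun a b => b <= a) (map size t).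
Proof.
elim: t => //= r t IH [_ hh ht]; have := IH ht.
by case: t hh {IH ht} => //= s t [h1 _] ->; rewrite h1.
Qed.

Lemma size_heads (t : seq (seq nat)) :
  size (rd (map (take 1) t)) = count (fun s => 0 < s) (map size t).
Proof. by elim: t => //= r t IH; rewrite size_cat IH addnC; case: r => [|a [|b r]]. Qed.

Lemma heads_bound j t (Z : seq (seq (nat * nat))) : tab t -> map (map fst) Z = t ->
  good j (rd (map (take 1) Z)) ->
  lval j (rd (map (take 1) Z)) <= \sum_(m < j) (0 < nth 0 (map size t) m).
Proof.
move=> ht hZ hg.
have hu : unzip1 (rd (map (take 1) Z)) = rd (map (take 1) t).
  rewrite /unzip1 map_rd -map_comp -hZ -map_comp; congr rd; apply: eq_map => r /=.
  by rewrite map_take.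
rewrite sum_nonempty ?tab_sizes // leq_min; apply/andP; split.
  by apply: lval_heads_j => //; rewrite hu; exact: heads_sorted.
apply: leq_trans (count_size _ _) _.
by rewrite -size_heads -hu size_map.
Qed.

Lemma rd_empty (t : seq (seq nat)) : all (fun r => size r <= 0) t -> rd t = [::].
Proof. by elim: t => //= r t IH /andP [hr /IH ->]; case: r hr. Qed.

Lemma upper j N : forall t Z, all (fun r => size r <= N) t -> tab t ->
  map (map fst) Z = t -> good j (rd Z) -> lval j (rd Z) <= part_sum (map size t) j.
Proof.
elim: N => [|N IH] t Z hN ht hZ hg.
  apply: leq_trans (count_size _ _) _.
  have : size (unzip1 (rd Z)) = size (rd t) by rewrite /unzip1 map_rd hZ.
  by rewrite size_map rd_empty // => ->.
rewrite lval_split ps_split addnC; apply: leq_add.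
  apply: IH.
  - rewrite all_map; apply/allP => r hr /=; rewrite size_drop.
    by have := allP hN r hr; rewrite /= leq_subLR add1n.
  - exact: tab_drop.
  - by rewrite -hZ -!map_comp; apply: eq_map => r /=; rewrite map_drop.
  - apply: good_subseq hg; apply: rd_subseq => r; exact: drop_subseq.
apply: heads_bound => //.
apply: good_subseq hg; apply: rd_subseq => r; exact: take_subseq.
Qed.

Lemma greene j w : (exists z, [/\ unzip1 z = w, good j z &
     part_sum (map size (P_tableau w)) j <= lval j z]) /\
  (forall z, unzip1 z = w -> good j z -> lval j z <= part_sum (map size (P_tableau w)) j).
Proof.
have [h1 h2] := KE_Gle (KE_P w).
have ht := tab_P w.
split.
  have [z [hz hg hv]] := lower j ht.
  have [z' [hz' [hg' hv']]] := h2 j z hz hg.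
  by exists z'; split => //; rewrite -hv.
move=> z hz hg.
have [z' [hz' [hg' hv']]] := h1 j z hz hg.
apply: leq_trans hv' _.
have [Z [e1 e2]] := reshape_lab hz'.
rewrite -e2; apply: (@upper j (\max_(r <- P_tableau w) size r)) => //.
- by apply/allP => r hr /=; exact: bigmaxn_sup_seq hr isT (leqnn _).
- by rewrite e2.
Qed.

Definition S j w := part_sum (map size (P_tableau w)) j.

Lemma swap_main j a b u v : u < v ->
  S j (a ++ v :: u :: b) <= S j (a ++ u :: v :: b) /\
  S j (a ++ u :: v :: b) <= (S j (a ++ v :: u :: b)).+1.
Proof.
move=> huv; split.
  have [[z' [hz' hg' hv']] _] := greene j (a ++ v :: u :: b).
  have [a' [b' [l1 [l2 [ez ha hb]]]]] := dec2 hz'.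
  apply: leq_trans hv' _.
  have hn : ~~ (((v, l1).2 == (u, l2).2) && ((v, l1).2 < j)).
    apply/negP => /andP [/eqP /= e hl]; subst l2.
    exact: (no_desc huv hl hg' ez).
  have := (greene j (a ++ u :: v :: b)).2 (a' ++ (u, l2) :: (v, l1) :: b').
  rewrite unzip1E /= ha hb => /(_ erefl (swap_good hn _)); rewrite -ez => /(_ hg').
  by rewrite ez swap_lval.
have [[z [hz hg hv]] _] := greene j (a ++ u :: v :: b).
have [a' [b' [l1 [l2 [ez ha hb]]]]] := dec2 hz.
apply: leq_trans hv _.
case: (boolP (((u, l1).2 == (v, l2).2) && ((u, l1).2 < j))) => hn; last first.
  have := (greene j (a ++ v :: u :: b)).2 (a' ++ (v, l2) :: (u, l1) :: b').
  rewrite unzip1E /= ha hb => /(_ erefl (swap_good hn _)); rewrite -ez => /(_ hg).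
  by rewrite ez swap_lval => h; exact: leqW.
move: hn => /andP [/eqP /= e hl]; subst l2.
have := (greene j (a ++ v :: u :: b)).2 (a' ++ (v, l1) :: (u, j) :: b').
rewrite unzip1E /= ha hb => /(_ erefl) H.
have hg2 : good j (a' ++ (v, l1) :: (u, j) :: b').
  move=> k hk; have := hg k hk; rewrite ez !cls_cat !cls_cons /=.
  have -> : (j == k) = false by apply/negbTE; rewrite neq_ltn hk orbT.
  case: (eqVneq l1 k) => [<-|//].
  rewrite !pathA /= => /and3P [h1 h2 /andP [h3 h4]].
  by rewrite h1 h4 (leq_trans h2 (ltnW huv)).
have := H hg2; rewrite ez !lval_cat !lval_cons /= hl ltnn.
rewrite /S /= => h; lia.
Qed.

Lemma nth_one_line n (s : 'S_n) k (hk : k < n) : nth 0 (one_line s) k = val (s (Ordinal hk)).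
Proof.
rewrite /one_line (nth_map (Ordinal hk)) ?size_enum_ord //; congr (val (s _)).
by apply: val_inj; rewrite /= nth_enum_ord.
Qed.

Lemma size_one_line n (s : 'S_n) : size (one_line s) = n.
Proof. by rewrite /one_line size_map size_enum_ord. Qed.

Lemma nth_swap (w : seq nat) i k : i.+1 < size w ->
  nth 0 (take i w ++ nth 0 w i.+1 :: nth 0 w i :: drop i.+2 w) k =
  nth 0 w (if k == i then i.+1 else if k == i.+1 then i else k).
Proof.
move=> hi; rewrite nth_cat size_take (ltnW hi).
case: (ltngtP k i) => hki.
- rewrite nth_take // ifF //; apply/eqP; lia.
- case: (eqVneq k i.+1) => [->|nk]; first by rewrite subSnn.
  have -> : k - i = (k - i.+2).+2 by lia.
  by rewrite /= nth_drop; congr nth; lia.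
- by rewrite ?hki ?eqxx subnn.
Qed.

Lemma one_line_split n (pi tau : 'S_n) (i0 i1 : 'I_n)
  (hi : val i1 = (val i0).+1)
  (htau : forall k : 'I_n, tau k = pi (tperm i0 i1 k)) :
  let w := one_line pi in
  w = take i0 w ++ nth 0 w i0 :: nth 0 w i0.+1 :: drop i0.+2 w /\
  one_line tau = take i0 w ++ nth 0 w i0.+1 :: nth 0 w i0 :: drop i0.+2 w.
Proof.
move=> w; have hsz : size w = n by apply: size_one_line.
have hi1 : (val i0).+1 < size w by rewrite hsz -hi; exact: ltn_ord.
split.
  by rewrite -drop_nth // -drop_nth ?(ltnW hi1) // cat_take_drop.
apply: (@eq_from_nth _ 0).
  have hi2 : (nat_of_ord i0).+1 < n by rewrite -(hi : nat_of_ord i1 = _); exact: ltn_ord.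
  rewrite size_cat size_take (ltnW hi1) /= size_drop !size_one_line; lia.
move=> k; rewrite size_one_line => hk.
rewrite nth_swap // nth_one_line htau.
have ho : val (tperm i0 i1 (Ordinal hk)) = if k == i0 then i0.+1 else if k == i0.+1 then val i0 else k.
  case: (eqVneq k i0) => [ek|nk].
    have -> : Ordinal hk = i0 by apply: val_inj.
    by rewrite tpermL.
  case: (eqVneq k i0.+1) => [ek|nk1].
    have -> : Ordinal hk = i1 by apply: val_inj; rewrite /= ek hi.
    by rewrite tpermR.
  rewrite tpermD //; apply/eqP => e; have /= e' := congr1 val e.
    by move: nk; rewrite -e' eqxx.
  by move: nk1; rewrite -e' hi eqxx.
rewrite -ho (nth_one_line pi (ltn_ord _)); congr (val (pi _)); exact: val_inj.
Qed.

Theorem proposition3 (n : nat) (hn : 2 <= n) (pi tau : 'S_n) (i0 i1 : 'I_n)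
  (hi : val i1 = (val i0).+1)
  (hasc : val (pi i0) < val (pi i1))
  (htau : forall k : 'I_n, tau k = pi (tperm i0 i1 k)) :
  forall j : nat, 1 <= j <= n ->
    part_sum (rsk_shape tau) j <= part_sum (rsk_shape pi) j
    /\ part_sum (rsk_shape pi) j <= (part_sum (rsk_shape tau) j).+1.
Proof.
move=> j _.
have [e1 e2] := one_line_split hi htau.
have hi1 : (val i0).+1 < n by rewrite -hi; exact: ltn_ord.
have huv : nth 0 (one_line pi) i0 < nth 0 (one_line pi) i0.+1.
  rewrite (nth_one_line pi (ltn_ord i0)) (nth_one_line pi hi1).
  have -> : Ordinal (ltn_ord i0) = i0 by apply: val_inj.
  by have -> : Ordinal hi1 = i1 by apply: val_inj; rewrite /= hi.
have := swap_main j (take i0 (one_line pi)) (drop i0.+2 (one_line pi)) huv.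
by rewrite -e1 -e2.
Qed.
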